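(* Suppose $\mathit{Act}$ is infinite. Then $\mathcal{E}_v'$ is complete for $\simeq$ over open monitors: for all monitors $m,n$ (possibly containing variables), if $m\simeq n$ then $\mathcal{E}_v'\vdash m=n$.
   Context: Monitors: terms $m,n ::= v \mid a.m \mid m+n \mid x$ over an action set $\mathit{Act}$ ($a\in\mathit{Act}$) and a countably infinite variable set $\mathit{Var}$, verdicts $v::=\mathit{end}\mid\mathit{yes}\mid\mathit{no}$; closed monitors contain no variables; a closed substitution maps variables to closed monitors. Transitions $\xrightarrow{\alpha}$, $\alpha\in\mathit{Act}\cup\{\tau\}$ ($\tau\notin\mathit{Act}$): least relation with $a.m\xrightarrow{a}m$; $m\xrightarrow{\alpha}m'$ implies $m+n\xrightarrow{\alpha}m'$ and $n+m\xrightarrow{\alpha}m'$; $v\xrightarrow{\alpha}v$ for each verdict $v$. Weak transitions: $m\xRightarrow{\varepsilon}m'$ iff $m(\xrightarrow{\tau})^*m'$; $m\xRightarrow{a}m'$ iff $m\xRightarrow{\varepsilon}\xrightarrow{a}\xRightarrow{\varepsilon}m'$; $m\xRightarrow{as'}m'$ ($s'\neq\varepsilon$) iff $m\xRightarrow{a}m_1\xRightarrow{s'}m'$. For closed $m$: $L_a(m)=\{s\mid m\xRightarrow{s}\mathit{yes}\}$, $L_r(m)=\{s\mid m\xRightarrow{s}\mathit{no}\}$; closed $m\simeq n$ iff $L_a(m)=L_a(n)$ and $L_r(m)=L_r(n)$; for open monitors $m\simeq n$ iff $\sigma(m)\simeq\sigma(n)$ for all closed substitutions $\sigma$. $\mathcal{E}\vdash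 m=n$ denotes derivability by reflexivity, symmetry, transitivity, substitution (from $t=t'$ infer $\sigma(t)=\sigma(t')$ for any substitution) and congruence for $a.\_$ and $+$. $\mathcal{E}_v$ consists of (A1) $x+y=y+x$; (A2) $x+(y+z)=(x+y)+z$; (A3) $x+x=x$; (A4) $x+\mathit{end}=x$; and, for each $a\in\mathit{Act}$, ($E_a$) $a.\mathit{end}=\mathit{end}$; ($Y_a$) $\mathit{yes}=\mathit{yes}+a.\mathit{yes}$; ($N_a$) $\mathit{no}=\mathit{no}+a.\mathit{no}$; ($D_a$) $a.(x+y)=a.x+a.y$. $\mathcal{E}_v'=\mathcal{E}_v\cup\{O1\}$ where (O1) $\mathit{yes}+\mathit{no}=\mathit{yes}+\mathit{no}+x$. *)

(* Defs.v *)
From Stdlib Require Import List Relations.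
Import ListNotations.
Set Implicit Arguments.

Inductive verdict : Type := vend | vyes | vno.

Section Monitors.
Variable Act : Type.

Inductive mon : Type :=
| MVerd : verdict -> mon
| MPre  : Act -> mon -> mon
| MSum  : mon -> mon -> mon
| MVar  : nat -> mon.

Fixpoint closed (m : mon) : Prop :=
  match m with
  | MVerd _ => True
  | MPre _ m => closed m
  | MSum m n => closed m /\ closed n
  | MVar _ => False
  end.

Fixpoint subst (s : nat -> mon) (m : mon) : mon :=
  match m with
  | MVerd v => MVerd v
  | MPre a m => MPre a (subst s m)
  | MSum m n => MSum (subst s m) (subst s n)
  | MVar x => s x
  end.

Definition closed_subst (s : nat -> mon) : Prop := forall x, closed (s x).

(* labels: Some a = action a, None = tau *)
Inductive step : mon -> option Act -> mon -> Prop :=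
| st_pre : forall a m, step (MPre a m) (Some a) m
| st_suml : forall m n al m', step m al m' -> step (MSum m n) al m'
| st_sumr : forall m n al m', step m al m' -> step (MSum n m) al m'
| st_verd : forall v al, step (MVerd v) al (MVerd v).

Definition tau_star : mon -> mon -> Prop :=
  clos_refl_trans mon (fun m m' => step m None m').

Fixpoint wstep (m : mon) (s : list Act) (m' : mon) : Prop :=
  match s with
  | [] => tau_star m m'
  | a :: s' => exists m1 m2 m3,
      tau_star m m1 /\ step m1 (Some a) m2 /\ tau_star m2 m3 /\ wstep m3 s' m'
  end.

Definition La (m : mon) (s : list Act) : Prop := wstep m s (MVerd vyes).
Definition Lr (m : mon) (s : list Act) : Prop := wstep m s (MVerd vno).

Definition cequiv (m n : mon) : Prop :=
  (forall s, La m s <-> La n s) /\ (forall s, Lr m s <-> Lr n s).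

Definition mequiv (m n : mon) : Prop :=
  forall s, closed_subst s -> cequiv (subst s m) (subst s n).

Inductive derivable (E : mon -> mon -> Prop) : mon -> mon -> Prop :=
| d_ax : forall t t', E t t' -> derivable E t t'
| d_refl : forall t, derivable E t t
| d_sym : forall t t', derivable E t t' -> derivable E t' t
| d_trans : forall t t' t'', derivable E t t' -> derivable E t' t'' -> derivable E t t''
| d_subst : forall (s : nat -> mon) t t', derivable E t t' -> derivable E (subst s t) (subst s t')
| d_pre : forall a t t', derivable E t t' -> derivable E (MPre a t) (MPre a t')
| d_sum : forall t1 t1' t2 t2', derivable E t1 t1' -> derivable E t2 t2' ->
    derivable E (MSum t1 t2) (MSum t1' t2').

Definition vx := MVar 0.
Definition vy := MVar 1.
Definition vz := MVar 2.
Definition mend := MVerd vend.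
Definition myes := MVerd vyes.
Definition mno := MVerd vno.

Inductive Ev : mon -> mon -> Prop :=
| A1 : Ev (MSum vx vy) (MSum vy vx)
| A2 : Ev (MSum vx (MSum vy vz)) (MSum (MSum vx vy) vz)
| A3 : Ev (MSum vx vx) vx
| A4 : Ev (MSum vx mend) vx
| Ea : forall a, Ev (MPre a mend) mend
| Ya : forall a, Ev myes (MSum myes (MPre a myes))
| Na : forall a, Ev mno (MSum mno (MPre a mno))
| Da : forall a, Ev (MPre a (MSum vx vy)) (MSum (MPre a vx) (MPre a vy)).

Inductive Evp : mon -> mon -> Prop :=
| Evp_Ev : forall t t', Ev t t' -> Evp t t'
| O1 : Evp (MSum myes mno) (MSum (MSum myes mno) vx).

End Monitors.

Definition infinite_type (A : Type) : Prop :=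
  forall l : list A, exists a : A, ~ In a l.

(* Main.v *)
Require Import Defs.
From Stdlib Require Import List Relations Setoid Morphisms Arith.
Import ListNotations.

Local Arguments MVerd {Act} _.
Local Arguments MPre {Act} _ _.
Local Arguments MSum {Act} _ _.
Local Arguments MVar {Act} _.
Local Arguments mend {Act}.
Local Arguments myes {Act}.
Local Arguments mno {Act}.
Local Arguments vx {Act}.
Local Arguments vy {Act}.
Local Arguments vz {Act}.

Set Implicit Arguments.
Section Proof.
Variable Act : Type.
Notation mon := (mon Act).
Notation deq := (derivable (@Evp Act)).

Definition L (v : verdict) (m : mon) (s : list Act) := wstep m s (MVerd v).

Lemma step_verd v al (t : mon) : step (MVerd v) al t -> t = MVerd v.
Proof. intro H; inversion H; auto. Qed.

Lemma step_tau (m t : mon) : step m None t -> exists v, t = MVerd v.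
Proof.
  intro H. remember (@None Act) as al. induction H; subst; try discriminate; eauto.
Qed.

Lemma tau_star_inv (m t : mon) : tau_star m t -> t = m \/ step m None t.
Proof.
  unfold tau_star. intro H. induction H; auto.
  destruct IHclos_refl_trans1 as [->|H1]; auto.
  destruct IHclos_refl_trans2 as [->|H2]; auto.
  destruct (step_tau H1) as [v ->]. apply step_verd in H2. subst. auto.
Qed.

Lemma wstep_verd v s (t : mon) : wstep (MVerd v) s t -> t = MVerd v.
Proof.
  revert t. induction s as [|a s IH]; simpl; intros t H.
  - destruct (tau_star_inv H) as [->|H']; auto. apply step_verd in H'; auto.
  - destruct H as (m1&m2&m3&H1&H2&H3&H4).
    destruct (tau_star_inv H1) as [->|H']; [|apply step_verd in H'; subst].
    + apply step_verd in H2; subst.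
      destruct (tau_star_inv H3) as [->|H']; [|apply step_verd in H'; subst]; auto.
    + apply step_verd in H2; subst.
      destruct (tau_star_inv H3) as [->|H']; [|apply step_verd in H'; subst]; auto.
Qed.

Lemma wstep_verd_intro v s : wstep (MVerd v : mon) s (MVerd v).
Proof.
  induction s; simpl. apply rt_refl.
  exists (MVerd v), (MVerd v), (MVerd v). repeat split; auto; try apply rt_refl.
  constructor.
Qed.

Lemma L_verd v v' s : L v (MVerd v' : mon) s -> v' = v.
Proof. intro H. apply wstep_verd in H. congruence. Qed.

Lemma wstep_tau (m m' : mon) s t : tau_star m m' -> wstep m' s t -> wstep m s t.
Proof.
  destruct s; simpl; intros H1 H2.
  - eapply rt_trans; eauto.
  - destruct H2 as (m1&m2&m3&A&B&C&D). exists m1, m2, m3. repeat split; auto.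
    eapply rt_trans; eauto.
Qed.

Lemma L_pre v a (t : mon) s : L v (MPre a t) s <-> exists s', s = a :: s' /\ L v t s'.
Proof.
  unfold L. split.
  - destruct s as [|b s]; simpl.
    + intro H. destruct (tau_star_inv H) as [E|E]; [discriminate| inversion E].
    + intros (m1&m2&m3&A&B&C&D).
      destruct (tau_star_inv A) as [->|E]; [|inversion E].
      inversion B; subst. exists s; split; auto. eapply wstep_tau; eauto.
  - intros (s'&->&H). simpl. exists (MPre a t), t, t. repeat split; try apply rt_refl; auto.
    constructor.
Qed.

Lemma L_sum v (t1 t2 : mon) s : L v (MSum t1 t2) s <-> L v t1 s \/ L v t2 s.
Proof.
  unfold L. destruct s as [|b s]; simpl; split.
  - intro H. destruct (tau_star_inv H) as [E|E]; [discriminate|].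
    inversion E; subst; [left|right]; apply rt_step; auto.
  - intros [H|H]; destruct (tau_star_inv H) as [E|E]; apply rt_step.
    + rewrite <- E. apply st_suml. constructor.
    + apply st_suml; auto.
    + rewrite <- E. apply st_sumr. constructor.
    + apply st_sumr; auto.
  - intros (m1&m2&m3&A&B&C&D).
    destruct (tau_star_inv A) as [->|E].
    + inversion B; subst; [left; exists t1|right; exists t2]; exists m2, m3; repeat split; auto; apply rt_refl.
    + inversion E; subst; [left|right]; exists m1, m2, m3; repeat split; auto; apply rt_step; auto.
  - intros [(m1&m2&m3&A&B&C&D)|(m1&m2&m3&A&B&C&D)];
    destruct (tau_star_inv A) as [->|E].
    + exists (MSum t1 t2), m2, m3. repeat split; auto. apply rt_refl. apply st_suml; auto.
    + exists m1, m2, m3. repeat split; auto. apply rt_step. apply st_suml; auto.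
    + exists (MSum t1 t2), m2, m3. repeat split; auto. apply rt_refl. apply st_sumr; auto.
    + exists m1, m2, m3. repeat split; auto. apply rt_step. apply st_sumr; auto.
Qed.

Fixpoint paths (m : mon) : list (list Act * mon) :=
  match m with
  | MVerd v => [([], MVerd v)]
  | MPre a m => map (fun p => (a :: fst p, snd p)) (paths m)
  | MSum m n => paths m ++ paths n
  | MVar x => [([], MVar x)]
  end.

Lemma Lpaths (sg : nat -> mon) v (m : mon) : forall s,
  L v (subst sg m) s <->
  exists w u r, In (w, u) (paths m) /\ s = w ++ r /\ L v (subst sg u) r.
Proof.
  induction m as [v0|a m IH|m1 IH1 m2 IH2|x]; intro s; simpl.
  - split. intro H; exists [], (MVerd v0), s; simpl; auto.
    intros (w&u&r&Hin&->&HL). destruct Hin as [E|[]]. injection E; intros; subst; auto.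
  - rewrite L_pre. split.
    + intros (s'&->&H'). apply IH in H'. destruct H' as (w&u&r&Hin&->&HL).
      exists (a::w), u, r. split; auto. apply in_map_iff. exists (w,u); auto.
    + intros (w&u&r&Hin&->&HL). apply in_map_iff in Hin.
      destruct Hin as ([w' u'] & E & Hin'). simpl in E; injection E; intros; subst.
      exists (w' ++ r). split; auto. apply IH. exists w', u, r. auto.
  - rewrite L_sum, IH1, IH2. split.
    + intros [(w&u&r&A&B&C)|(w&u&r&A&B&C)]; exists w, u, r; rewrite in_app_iff; auto.
    + intros (w&u&r&A&B&C). rewrite in_app_iff in A. destruct A; [left|right]; exists w, u, r; auto.
  - split. intro H; exists [], (MVar x), s; simpl; auto.
    intros (w&u&r&Hin&->&HL). destruct Hin as [E|[]]. injection E; intros; subst; auto.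
Qed.

Lemma paths_leaf (m : mon) w u : In (w,u) (paths m) ->
  (exists v, u = MVerd v) \/ (exists x, u = MVar x).
Proof.
  revert w. induction m as [v0|a m IH|m1 IH1 m2 IH2|x]; simpl; intros w H.
  - destruct H as [E|[]]; injection E; intros; subst; eauto.
  - apply in_map_iff in H. destruct H as ([w' u'] & E & H). injection E; intros; subst. eauto.
  - apply in_app_iff in H; destruct H; eauto.
  - destruct H as [E|[]]; injection E; intros; subst; eauto.
Qed.

Definition path_absorbed (P : list (list Act * mon)) (w : list Act) (u : mon) : Prop :=
  In (w,u) P \/ u = MVerd vend \/
  (exists v w0 r, u = MVerd v /\ In (w0, MVerd v) P /\ w = w0 ++ r) \/
  (exists w1 r1 w2 r2, In (w1, MVerd vyes) P /\ In (w2, MVerd vno) P /\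
     w = w1 ++ r1 /\ w = w2 ++ r2).

Definition sg0 : nat -> mon := fun _ => MVerd vend.
Definition sg1 (v : verdict) (b : Act) (x : nat) : nat -> mon :=
  fun y => if Nat.eqb y x then MPre b (MVerd v) else MVerd vend.

Lemma sem_verd (m n : mon) v w : v <> vend ->
  (forall s, L v (subst sg0 m) s <-> L v (subst sg0 n) s) ->
  In (w, MVerd v) (paths n) ->
  exists w0 r, In (w0, MVerd v) (paths m) /\ w = w0 ++ r.
Proof.
  intros Hv Heq Hin.
  assert (H : L v (subst sg0 n) (w ++ [])).
  { apply Lpaths. exists w, (MVerd v), []. repeat split; auto. apply wstep_verd_intro. }
  apply Heq in H. apply Lpaths in H. destruct H as (w0&u0&r&Hin0&E&HL).
  rewrite app_nil_r in E.
  destruct (paths_leaf _ _ _ Hin0) as [[v' ->]|[y ->]].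
  - simpl in HL. apply L_verd in HL. subst. eauto.
  - simpl in HL. unfold sg0 in HL. apply L_verd in HL. congruence.
Qed.

Lemma sem_var (m n : mon) v b x w : v <> vend -> ~ In b w ->
  (forall w0 u0, In (w0,u0) (paths m) -> ~ In b w0) ->
  (forall s, L v (subst (sg1 v b x) m) s <-> L v (subst (sg1 v b x) n) s) ->
  In (w, MVar x) (paths n) ->
  In (w, MVar x) (paths m) \/ exists w0 r, In (w0, MVerd v) (paths m) /\ w = w0 ++ r.
Proof.
  intros Hv Hbw Hbm Heq Hin.
  assert (H : L v (subst (sg1 v b x) n) (w ++ [b])).
  { apply Lpaths. exists w, (MVar x), [b]. repeat split; auto. simpl. unfold sg1.
    rewrite Nat.eqb_refl. apply L_pre. exists []. split; auto. apply wstep_verd_intro. }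
  apply Heq in H. apply Lpaths in H. destruct H as (w0&u0&r&Hin0&E&HL).
  pose proof (Hbm _ _ Hin0) as Hb0.
  destruct (paths_leaf _ _ _ Hin0) as [[v' ->]|[y ->]].
  - simpl in HL. apply L_verd in HL. subst. right.
    destruct (app_eq_app _ _ _ _ E) as (l & [[E1 E2]|[E1 E2]]).
    + exists w0, l. auto.
    + destruct l as [|c l].
      * exists w, []. rewrite app_nil_r in *. subst; auto.
      * simpl in E2. injection E2; intros; subst. exfalso. apply Hb0.
        apply in_app_iff; simpl; auto.
  - simpl in HL. unfold sg1 in HL. destruct (Nat.eqb_spec y x) as [->|Hne].
    + left. apply L_pre in HL. destruct HL as (s' & -> & _).
      destruct (app_eq_app _ _ _ _ E) as (l & [[E1 E2]|[E1 E2]]).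
      * destruct l as [|c l].
        -- rewrite app_nil_r in E1. subst; auto.
        -- simpl in E2. injection E2; intros; subst. exfalso. apply Hbw.
           apply in_app_iff; simpl; auto.
      * destruct l as [|c l].
        -- rewrite app_nil_r in E1. subst; auto.
        -- simpl in E2. injection E2; intros; subst. exfalso. apply Hb0.
           apply in_app_iff; simpl; auto.
    + apply L_verd in HL. congruence.
Qed.

Lemma sem_path (m n : mon) : infinite_type Act -> mequiv m n ->
  forall w u, In (w,u) (paths n) -> path_absorbed (paths m) w u.
Proof.
  intros Hinf Heq w u Hin. unfold path_absorbed.
  destruct (paths_leaf _ _ _ Hin) as [[v ->]|[x ->]].
  - destruct (Heq sg0) as [Ha Hr]. { intro; exact I. }
    destruct v.
    + right; left; auto.
    + right; right; left. destruct (@sem_verd m n vyes w) as (w0&r&A&B); auto.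
      discriminate. exists vyes, w0, r; auto.
    + right; right; left. destruct (@sem_verd m n vno w) as (w0&r&A&B); auto.
      discriminate. exists vno, w0, r; auto.
  - destruct (Hinf (w ++ concat (map fst (paths m)))) as [b Hb].
    assert (Hbw : ~ In b w). { intro; apply Hb; apply in_app_iff; auto. }
    assert (Hbm : forall w0 u0, In (w0,u0) (paths m) -> ~ In b w0).
    { intros w0 u0 H H'. apply Hb. apply in_app_iff. right. apply in_concat.
      exists w0. split; auto. apply in_map_iff. exists (w0,u0); auto. }
    assert (Cl : forall v, closed_subst (sg1 v b x)).
    { intros v y. unfold sg1. destruct (y =? x); simpl; exact I. }
    destruct (Heq _ (Cl vyes)) as [Ha _].
    destruct (Heq _ (Cl vno)) as [_ Hr].
    destruct (@sem_var m n vyes b x w) as [H1|(w1&r1&A1'&B1)]; auto. discriminate.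
    destruct (@sem_var m n vno b x w) as [H2|(w2&r2&A2'&B2)]; auto. discriminate.
    right; right; right. exists w1, r1, w2, r2. auto.
Qed.


Global Instance deq_equiv : Equivalence deq.
Proof. split. intro; apply d_refl. intros ? ? ?; apply d_sym; auto.
  intros ? ? ? ? ?; eapply d_trans; eauto. Qed.

Global Instance sum_proper : Proper (deq ==> deq ==> deq) (@MSum Act).
Proof. intros ? ? ? ? ? ?; apply d_sum; auto. Qed.

Global Instance pre_proper : Proper (eq ==> deq ==> deq) (@MPre Act).
Proof. intros ? ? -> ? ? ?; apply d_pre; auto. Qed.

Definition sg3 (t1 t2 t3 : mon) : nat -> mon :=
  fun k => match k with 0 => t1 | 1 => t2 | _ => t3 end.

Lemma ax_comm (t1 t2 : mon) : deq (MSum t1 t2) (MSum t2 t1).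
Proof. apply (d_subst (sg3 t1 t2 t1) (t:=MSum vx vy) (t':=MSum vy vx)).
  apply d_ax. apply Evp_Ev. apply A1. Qed.

Lemma ax_assoc (t1 t2 t3 : mon) : deq (MSum t1 (MSum t2 t3)) (MSum (MSum t1 t2) t3).
Proof. apply (d_subst (sg3 t1 t2 t3) (t:=MSum vx (MSum vy vz)) (t':=MSum (MSum vx vy) vz)).
  apply d_ax. apply Evp_Ev. apply A2. Qed.

Lemma ax_idem (t1 : mon) : deq (MSum t1 t1) t1.
Proof. apply (d_subst (sg3 t1 t1 t1) (t:=MSum vx vx) (t':=vx)).
  apply d_ax. apply Evp_Ev. apply A3. Qed.

Lemma ax_end (t1 : mon) : deq (MSum t1 (MVerd vend)) t1.
Proof. apply (d_subst (sg3 t1 t1 t1) (t:=MSum vx mend) (t':=vx)).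
  apply d_ax. apply Evp_Ev. apply A4. Qed.

Lemma ax_dist a (t1 t2 : mon) : deq (MPre a (MSum t1 t2)) (MSum (MPre a t1) (MPre a t2)).
Proof. apply (d_subst (sg3 t1 t2 t1) (t:=MPre a (MSum vx vy)) (t':=MSum (MPre a vx) (MPre a vy))).
  apply d_ax. apply Evp_Ev. apply Da. Qed.

Lemma ax_o1 (t1 : mon) : deq (MSum (MVerd vyes) (MVerd vno)) (MSum (MSum (MVerd vyes) (MVerd vno)) t1).
Proof. apply (d_subst (sg3 t1 t1 t1) (t:=MSum myes mno) (t':=MSum (MSum myes mno) vx)).
  apply d_ax. apply O1. Qed.

Lemma ax_preend a : deq (MPre a (MVerd vend)) (MVerd vend : mon).
Proof. apply d_ax. apply Evp_Ev. apply Ea. Qed.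

Lemma ax_verd v a : deq (MVerd v : mon) (MSum (MVerd v) (MPre a (MVerd v))).
Proof.
  destruct v.
  - rewrite ax_preend. symmetry. apply ax_idem.
  - apply d_ax. apply Evp_Ev. apply Ya.
  - apply d_ax. apply Evp_Ev. apply Na.
Qed.

Lemma end_l (t : mon) : deq (MSum (MVerd vend) t) t.
Proof. rewrite ax_comm. apply ax_end. Qed.

Lemma swap12 (t1 t2 t3 : mon) : deq (MSum t1 (MSum t2 t3)) (MSum t2 (MSum t1 t3)).
Proof. rewrite ax_assoc, (ax_comm t1 t2), <- ax_assoc. reflexivity. Qed.

Definition pw (w : list Act) (t : mon) : mon := fold_right (@MPre Act) t w.
Definition pm (p : list Act * mon) : mon := pw (fst p) (snd p).

Lemma pw_cong w (t t' : mon) : deq t t' -> deq (pw w t) (pw w t').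
Proof. intro H. induction w; simpl; auto. rewrite IHw. reflexivity. Qed.

Lemma pw_app w1 w2 (t : mon) : pw (w1 ++ w2) t = pw w1 (pw w2 t).
Proof. unfold pw. apply fold_right_app. Qed.

Lemma pw_sum w (t t' : mon) : deq (pw w (MSum t t')) (MSum (pw w t) (pw w t')).
Proof. induction w; simpl. reflexivity. rewrite IHw. apply ax_dist. Qed.

Lemma pw_end w : deq (pw w (MVerd vend)) (MVerd vend).
Proof. induction w; simpl. reflexivity. rewrite IHw. apply ax_preend. Qed.

Fixpoint sumL (l : list (list Act * mon)) : mon :=
  match l with [] => MVerd vend | p :: l => MSum (pm p) (sumL l) end.

Lemma sum_app l1 l2 : deq (sumL (l1 ++ l2)) (MSum (sumL l1) (sumL l2)).
Proof. induction l1; simpl. symmetry; apply end_l.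
  rewrite IHl1. apply ax_assoc. Qed.

Lemma pre_sum a l : deq (MPre a (sumL l)) (sumL (map (fun p => (a :: fst p, snd p)) l)).
Proof. induction l; simpl. apply ax_preend. rewrite ax_dist, IHl. reflexivity. Qed.

Lemma norm (m : mon) : deq m (sumL (paths m)).
Proof.
  induction m; simpl.
  - symmetry; apply ax_end.
  - rewrite IHm at 1. apply pre_sum.
  - rewrite sum_app, IHm1, IHm2 at 1. reflexivity.
  - symmetry; apply ax_end.
Qed.

Definition absorbs l (t : mon) := deq (MSum t (sumL l)) (sumL l).

Lemma abs_in l p : In p l -> absorbs l (pm p).
Proof.
  unfold absorbs. induction l as [|q l IH]; simpl; intro Hin; [contradiction|destruct Hin as [E|H]].
  - subst. rewrite ax_assoc, ax_idem. reflexivity.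
  - rewrite swap12, IH; auto. reflexivity.
Qed.

Lemma abs_sum l1 l2 : (forall p, In p l2 -> absorbs l1 (pm p)) -> absorbs l1 (sumL l2).
Proof.
  unfold absorbs. induction l2 as [|q l IH]; simpl; intro H.
  - apply end_l.
  - rewrite <- ax_assoc, IH, H; auto. reflexivity.
Qed.

Lemma abs_step l (t1 t2 : mon) : absorbs l t1 -> deq t1 (MSum t1 t2) -> absorbs l t2.
Proof.
  unfold absorbs. intros H1 H2. rewrite <- H1 at 1. rewrite ax_assoc, (ax_comm t2 t1), <- H2.
  exact H1.
Qed.

Lemma abs_plus l (t1 t2 : mon) : absorbs l t1 -> absorbs l t2 -> absorbs l (MSum t1 t2).
Proof. unfold absorbs. intros H1 H2. rewrite <- ax_assoc, H2. exact H1. Qed.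

Lemma verd_ext v r : deq (MVerd v : mon) (MSum (MVerd v) (pw r (MVerd v))).
Proof.
  induction r as [|a r IH]; simpl.
  - symmetry; apply ax_idem.
  - symmetry. transitivity (MSum (MSum (MVerd v) (MPre a (MVerd v))) (MPre a (pw r (MVerd v)))).
    { rewrite <- (ax_verd v a). reflexivity. }
    rewrite <- ax_assoc, <- ax_dist, <- IH. symmetry. apply ax_verd.
Qed.

Lemma abs_verd l v w0 r : In (w0, MVerd v) l -> absorbs l (pw (w0 ++ r) (MVerd v)).
Proof.
  intro H. apply abs_step with (t1 := pw w0 (MVerd v)).
  - apply (abs_in l (w0, MVerd v)); auto.
  - rewrite pw_app, <- pw_sum. apply pw_cong. apply verd_ext.
Qed.

Lemma abs_both l w2 r (u : mon) : absorbs l (pw w2 (MVerd vyes)) -> absorbs l (pw w2 (MVerd vno)) ->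
  absorbs l (pw (w2 ++ r) u).
Proof.
  intros H1 H2. apply abs_step with (t1 := MSum (pw w2 (MVerd vyes)) (pw w2 (MVerd vno))).
  - apply abs_plus; auto.
  - rewrite pw_app, <- !pw_sum. apply pw_cong. apply ax_o1.
Qed.

Lemma abs_path l w (u : mon) : path_absorbed l w u -> absorbs l (pw w u).
Proof.
  intros [H|[H|[(v&w0&r&->&H&->)|(w1&r1&w2&r2&H1&H2&E1&E2)]]].
  - apply (abs_in l (w,u)); auto.
  - subst. unfold absorbs. rewrite pw_end. apply end_l.
  - apply abs_verd; auto.
  - pose proof E2 as E3. rewrite E1 in E3. destruct (app_eq_app _ _ _ _ E3) as (l0 & [[F1 F2]|[F1 F2]]).
    + rewrite E1, F1. apply abs_both.
      * apply (abs_in l (w2 ++ l0, MVerd vyes)). rewrite <- F1; auto.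
      * apply abs_verd; auto.
    + rewrite E2, F1. apply abs_both.
      * apply abs_verd; auto.
      * apply (abs_in l (w1 ++ l0, MVerd vno)). rewrite <- F1; auto.
Qed.

Lemma mequiv_sym (m n : mon) : mequiv m n -> mequiv n m.
Proof.
  intros H s Hs. destruct (H s Hs) as [A B]. split; intro; symmetry; auto.
Qed.

Lemma completeness (Hinf : infinite_type Act) (m n : mon) : mequiv m n -> deq m n.
Proof.
  intro H.
  assert (A : absorbs (paths m) (sumL (paths n))).
  { apply abs_sum. intros [w u] Hin. apply abs_path. eapply sem_path; eauto. }
  assert (B : absorbs (paths n) (sumL (paths m))).
  { apply abs_sum. intros [w u] Hin. apply abs_path. eapply sem_path; eauto.
    apply mequiv_sym; auto. }
  unfold absorbs in *.
  rewrite (norm m), (norm n). rewrite <- A at 1. rewrite ax_comm. exact B.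
Qed.

End Proof.
Unset Implicit Arguments.

Theorem mainTheorem9 (Act : Type) (Hinf : infinite_type Act) (m n : mon Act) :
  mequiv m n -> derivable (@Evp Act) m n.
Proof. apply completeness; auto. Qed.
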